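(* Let $M\in\mathrm{M}_n(\mathbb{K})$ with minimal polynomial $\mu_M=f_1^{m_1}\cdots f_s^{m_s}$, where $f_1,\dots,f_s\in\mathbb{K}[x]$ are pairwise distinct monic irreducible polynomials and $m_i\ge 1$, and let $\mathcal{C}\subseteq\mathbb{L}^n$ be an $M$-code of dimension $k$. Let $\Gamma=\{i\in\{1,\dots,s\} : \ker(f_i^{m_i}(M))\subseteq\mathcal{C}\}$ (kernel in $\mathbb{L}^n$) and $d_\Gamma=\sum_{i\in\Gamma}\dim_{\mathbb{K}}\ker(f_i^{m_i}(M))$. Then $M_r(\mathcal{C})=r$ for all $r\in\{1,\dots,d_\Gamma\}$.
   Context: Let $\mathbb{L}/\mathbb{K}$ be a field extension of finite degree $m$, and $n\ge 1$ an integer with $m\ge n$ (standing assumption). Vectors are row vectors; for a matrix $A$ with entries in $\mathbb{K}$, $\ker(A)$ denotes $\{c : cA^t=0\}$ in $\mathbb{K}^n$ or in $\mathbb{L}^n$. Fix a $\mathbb{K}$-basis $\mathcal{B}$ of $\mathbb{L}$; for $c=(c_1,\dots,c_n)\in\mathbb{L}^n$ let $M_{\mathcal{B}}(c)\in\mathrm{M}_{m\times n}(\mathbb{K})$ be the matrix whose $j$-th column is the coordinate vector of $c_j$ in $\mathcal{B}$. The rank support $\mathrm{Rsupp}(c)\subseteq\mathbb{K}^n$ is the $\mathbb{K}$-row space of $M_{\mathcal{B}}(c)$, and $\mathrm{wt}_R(c)=\dim_{\mathbb{K}}\mathrm{Rsupp}(c)$. For an $\mathbb{L}$-subspace $\mathcal{D}\subseteq\mathbb{L}^n$,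 $\mathrm{Rsupp}(\mathcal{D})$ is the $\mathbb{K}$-span of all $\mathrm{Rsupp}(d)$, $d\in\mathcal{D}$, and $\mathrm{wt}_R(\mathcal{D})=\dim_{\mathbb{K}}\mathrm{Rsupp}(\mathcal{D})$. A linear $[n,k]$ code is a $k$-dimensional $\mathbb{L}$-subspace $\mathcal{C}\subseteq\mathbb{L}^n$; for $1\le r\le k$, $M_r(\mathcal{C})=\min\{\mathrm{wt}_R(\mathcal{D}) : \mathcal{D}\subseteq\mathcal{C},\ \dim_{\mathbb{L}}\mathcal{D}=r\}$. For $M\in\mathrm{M}_n(\mathbb{K})$, a linear code $\mathcal{C}\subseteq\mathbb{L}^n$ is an $M$-code if $cM^t\in\mathcal{C}$ for all $c\in\mathcal{C}$. *)

(* Defs.v *)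
From HB Require Import structures.
From mathcomp Require Import all_boot all_order all_algebra all_field.
Set Implicit Arguments. Unset Strict Implicit. Unset Printing Implicit Defensive.
Import GRing.Theory.
Local Open Scope ring_scope.

Definition is_min (P : nat -> Prop) (k : nat) : Prop :=
  P k /\ (forall j, P j -> (k <= j)%N).

Section RankMetric.
Variables (K : fieldType) (L : fieldExtType K) (n : nat).

(* The matrix M_B(c) in M_{m x n}(K), m = [L:K], B = vbasis {:L} (a fixed
   K-basis of L): column j holds the B-coordinates of c_j. *)
Definition MB (c : 'rV[L]_n) : 'M[K]_(\dim {:L}%VS, n) :=
  \matrix_(i < \dim {:L}%VS, j < n) coord (vbasis {:L}%VS) i (c ord0 j).

(* Rsupp(c) is the K-row space of MB c ; wt_R(c) is its dimension. *)
Definition wtR (c : 'rV[L]_n) : nat := \rank (MB c).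

(* wt_R(D) = dim_K of the K-span of all Rsupp(d), d in D, i.e. of the
   smallest K-subspace of K^n (given as a row space) containing every
   Rsupp(d). [is_wtR_sub D w] means wt_R(D) = w. *)
Definition is_wtR_sub (D : {vspace 'rV[L]_n}) (w : nat) : Prop :=
  is_min (fun j => exists V : 'M[K]_n,
            \rank V = j /\ forall d, d \in D -> (MB d <= V)%MS) w.

Definition is_Mr (C : {vspace 'rV[L]_n}) (r v : nat) : Prop :=
  is_min (fun j => exists D : {vspace 'rV[L]_n},
            [/\ (D <= C)%VS, \dim D = r & is_wtR_sub D j]) v.

Definition mxL (A : 'M[K]_n) : 'M[L]_n := map_mx (fun a : K => a%:A) A.

Definition is_M_code (M : 'M[K]_n) (C : {vspace 'rV[L]_n}) : Prop :=
  forall c, c \in C -> c *m (mxL M)^T \in C.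

End RankMetric.

(* Main.v *)
Require Import Defs.
From HB Require Import structures.
From mathcomp Require Import all_boot all_order all_algebra all_field.
Import GRing.Theory.
Local Open Scope ring_scope.

Set Implicit Arguments. Unset Strict Implicit. Unset Printing Implicit Defensive.


Section S.
Variables (K : fieldType) (L : fieldExtType K) (n : nat).
Local Notation F := (in_alg L).
Local Notation b := (vbasis {:L}%VS).

Lemma MB_key p (V : 'M[K]_(p, n)) (lam : 'I_p -> L) :
  MB (\sum_k lam k *: row k (map_mx F V)) =
  (\matrix_(i < \dim {:L}%VS, k < p) coord b i (lam k)) *m V.
Proof.
apply/matrixP => i j; rewrite !mxE summxE linear_sum /=.
apply: eq_bigr => k _; rewrite !mxE /= mulrC. idtac.
by rewrite mulr_algl linearZ /= mulrC.
Qed.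

Lemma MB_inj : injective (@MB K L n).
Proof.
move=> c1 c2 e; apply/rowP => j; rewrite [c1 0 j](coord_vbasis (memvf _)).
rewrite [c2 0 j](coord_vbasis (memvf _)); apply: eq_bigr => i _.
by move/matrixP: e => /(_ i j); rewrite !mxE => ->.
Qed.

Lemma lowerb p (V : 'M[K]_(p, n)) (D : {vspace 'rV[L]_n}) :
  (forall d, d \in D -> (MB d <= V)%MS) -> (\dim D <= \rank V)%N.
Proof.
move=> HD.
pose X := [tuple row k (map_mx F (row_base V)) | k < \rank V].
suff sDX : (D <= <<X>>)%VS.
  apply: leq_trans (dimvS sDX) _.
  by apply: leq_trans (dim_span _) _; rewrite size_tuple.
apply/subvP => d dD.
have : (MB d <= row_base V)%MS by rewrite eq_row_base; apply: HD.
case/submxP => Y eY.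
pose lam k := \sum_i Y i k *: b`_i.
have -> : d = \sum_k lam k *: row k (map_mx F (row_base V)).
  apply: MB_inj; rewrite MB_key eY; congr (_ *m _).
  apply/matrixP => i k; rewrite mxE coord_sum_free //.
  exact: (basis_free (vbasisP _)).
apply: memv_suml => k _; apply: memvZ; apply: memv_span.
have -> : row k (map_mx F (row_base V)) = X`_k.
  by rewrite -tnth_nth tnth_mktuple.
by apply: mem_nth; rewrite size_tuple.
Qed.

Lemma upperb p (V : 'M[K]_(p, n)) d :
  d \in <<[tuple row k (map_mx F V) | k < p]>>%VS -> (MB d <= V)%MS.
Proof.
move/coord_span => ->.
have -> : forall lam : 'I_p -> L,
   \sum_i lam i *: [tuple row k (map_mx F V) | k < p]`_i =
   \sum_i lam i *: row i (map_mx F V).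
  by move=> lam; apply: eq_bigr => i _; rewrite -tnth_nth tnth_mktuple.
by rewrite MB_key submxMl.
Qed.

Lemma free_rows p (V : 'M[K]_(p, n)) : row_free V ->
  free [tuple row k (map_mx F V) | k < p].
Proof.
move=> fV; apply/freeP => k Hk i.
have : (\row_i k i) *m map_mx F V = 0 *m map_mx F V.
  rewrite mul0mx mulmx_sum_row -[RHS]Hk; apply: eq_bigr => j _.
  by rewrite -tnth_nth tnth_mktuple mxE.
move/(row_free_inj _) => /(_ _) /rowP /(_ i).
by rewrite !mxE => ->; rewrite ?row_free_map.
Qed.

End S.

Lemma horner_tr (K : fieldType) m (M : 'M[K]_m.+1) p :
  (horner_mx M p)^T = horner_mx M^T p.
Proof.
elim/poly_ind: p => [|p c IH]; first by rewrite !rmorph0 trmx0.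
rewrite !rmorphD !rmorphM /= !horner_mx_X !horner_mx_C raddfD /= -IH tr_scalar_mx.
congr (_ + _); rewrite -!mulmxE trmx_mul.
by rewrite -!trmx_mul (comm_mx_horner p (erefl : comm_mx M M)).
Qed.

Unset Implicit Arguments.
Set Strict Implicit.

Theorem corollary3 (K : fieldType) (L : fieldExtType K) (n' : nat)
  (hmn : (n'.+1 <= \dim {:L}%VS)%N)
  (M : 'M[K]_n'.+1) (s : nat) (f : 'I_s -> {poly K}) (mult : 'I_s -> nat)
  (hf_monic : forall i, f i \is monic)
  (hf_irr : forall i, irreducible_poly (f i))
  (hf_inj : injective f)
  (hmult : forall i, (1 <= mult i)%N)
  (hmin : mxminpoly M = \prod_(i < s) f i ^+ mult i)
  (C : {vspace 'rV[L]_n'.+1}) (k : nat) (hk : \dim C = k)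
  (hC : is_M_code M C)
  (Gamma : {set 'I_s})
  (hGamma : forall i, i \in Gamma <->
     (forall c : 'rV[L]_n'.+1,
        c *m (mxL L (horner_mx M (f i ^+ mult i)))^T = 0 -> c \in C)) :
  let dGamma := (\sum_(i in Gamma) \rank (kermx (horner_mx M (f i ^+ mult i))^T))%N in
  forall r : nat, (1 <= r <= dGamma)%N -> is_Mr C r r.
Proof.
move=> dGamma r /andP[r1 rd].
have cop : forall i j, i != j -> coprimep (f i) (f j).
  move=> i j nij; apply/coprimepP => d di dj.
  case: (boolP (size d == 1)) => [|s1]; first by rewrite size_poly_eq1.
  have ei := (hf_irr i).2 d s1 di; have ej := (hf_irr j).2 d s1 dj.
  have : f i %= f j by rewrite eqp_sym in ei; apply: eqp_trans ei ej.
  rewrite eqp_monic ?hf_monic // => /eqP /hf_inj e.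
  by rewrite e eqxx in nij.
pose A i := horner_mx M (f i ^+ mult i).
pose W := (\sum_(i in Gamma) kermx (A i)^T)%MS.
have rW : \rank W = dGamma.
  have dx : mxdirect (\sum_(i in Gamma) kermxpoly M^T (f i ^+ mult i))%MS.
    apply: mxdirect_sum_kermx => i j _ _ nij.
    by apply: coprimep_expl; apply: coprimep_expr; apply: cop; rewrite eq_sym.
  move/mxdirectP: dx => /= dx.
  have -> : W = (\sum_(i in Gamma) kermxpoly M^T (f i ^+ mult i))%MS.
    by apply: eq_bigr => i _; rewrite /kermxpoly /A horner_tr.
  rewrite dx; apply: eq_bigr => i _; by rewrite horner_tr.
have WC : forall v : 'rV[K]_n'.+1, (v <= W)%MS -> map_mx (in_alg L) v \in C.
  move=> v /sub_sumsmxP [u ->].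
  have -> : forall (g : 'I_s -> 'rV[K]_n'.+1), map_mx (in_alg L) (\sum_(i in Gamma) g i)
     = \sum_(i in Gamma) map_mx (in_alg L) (g i).
    by move=> g; apply: big_morph => [x y|]; [exact: map_mxD | exact: map_mx0].
  apply: memv_suml => i iG; apply: (proj1 (hGamma i) iG).
  rewrite -[mxL L _]/(map_mx (in_alg L) _) map_trmx -map_mxM -mulmxA mulmx_ker.
  by rewrite mulmx0 map_mx0.
have rn : (r <= n'.+1)%N by rewrite (leq_trans rd) // -rW rank_leq_col.
have rrW : (r <= \rank W)%N by rewrite rW.
pose Vr := (pid_mx r : 'M_(r, \rank W)) *m row_base W.
pose Vs := (pid_mx r : 'M_(n'.+1, \rank W)) *m row_base W.
have rVr : \rank Vr = r by rewrite mxrankMfree ?row_base_free // rank_pid_mx.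
have rVs : \rank Vs = r by rewrite mxrankMfree ?row_base_free // rank_pid_mx.
have VrVs : (Vr <= Vs)%MS.
  have -> : Vr = (pid_mx r : 'M_(r, n'.+1)) *m Vs.
    by rewrite /Vr /Vs mulmxA mul_pid_mx minnn (minn_idPr rn).
  exact: submxMl.
have VrW : (Vr <= W)%MS by rewrite /Vr (submx_trans (submxMl _ _)) // eq_row_base.
pose X := [tuple row k (map_mx (in_alg L) Vr) | k < r].
pose D := <<X>>%VS.
have dD : \dim D = r.
  have : free X by apply: free_rows; rewrite /row_free rVr.
  by move/eqnP; rewrite size_tuple.
have DC : (D <= C)%VS.
  apply/span_subvP => x /tnthP [kk ->]; rewrite tnth_mktuple -map_row.
  by apply: WC; rewrite (submx_trans (row_sub _ _)).
split.
  exists D; split => //; split.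
    exists Vs; split => // d dd; apply: submx_trans VrVs; exact: upperb.
  move=> j [V [<- HV]]; rewrite -dD; exact: lowerb.
move=> j [D' [_ <- [[V [<- HV]] _]]]; exact: lowerb.
Qed.
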